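(* If $g\in G$ satisfies $g(x)=x$, then $g=1$. Consequently the map $G\to G(x)$, $g\mapsto g(x)$, is a bijection.
   Context: $\mathbb F$ is a field of characteristic zero and $\mathfrak{sl}_2$ is the Lie algebra of $2\times2$ trace-zero matrices over $\mathbb F$. The equitable basis is $x=\begin{pmatrix}1&0\\0&-1\end{pmatrix}$, $y=\begin{pmatrix}-1&2\\0&1\end{pmatrix}$, $z=\begin{pmatrix}-1&0\\-2&1\end{pmatrix}$. Let $x^*=\begin{pmatrix}1&-1\\1&-1\end{pmatrix}$, $y^*=\begin{pmatrix}0&0\\1&0\end{pmatrix}$, $z^*=\begin{pmatrix}0&-1\\0&0\end{pmatrix}$ (these are nilpotent). $G$ is the subgroup of $\mathrm{Aut}_{\mathbb F}(\mathfrak{sl}_2)$ generated by $\exp(\mathrm{ad}\,x^* )$, $\exp(\mathrm{ad}\,y^* )$ and $\exp(\mathrm{ad}\,z^* )$. $G(x)$ denotes the orbit $\{g(x): g\in G\}$. *)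

(* Defs.v *)
From HB Require Import structures.
From mathcomp Require Import all_boot all_order all_algebra.
Set Implicit Arguments. Unset Strict Implicit. Unset Printing Implicit Defensive.
Import GRing.Theory.
Local Open Scope ring_scope.

Section SL2.
Variable F : fieldType.

Definition mx2 (a b c d : F) : 'M[F]_2 :=
  \matrix_(i < 2, j < 2)
    if i == ord0 then (if j == ord0 then a else b) else (if j == ord0 then c else d).

Definition in_sl2 (A : 'M[F]_2) : Prop := \tr A = 0.

Definition ad (a : 'M[F]_2) (A : 'M[F]_2) : 'M[F]_2 := a *m A - A *m a.

(* exponential of a nilpotent endomorphism D of the 4-dimensional space M_2(F):
   D^4 = 0, so exp D = sum_{k<4} D^k / k!  (exact truncation) *)
Definition expnil (D : 'M[F]_2 -> 'M[F]_2) (A : 'M[F]_2) : 'M[F]_2 :=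
  \sum_(k < 4) ((k`!)%:R)^-1 *: iter k D A.

Definition ex : 'M[F]_2 := mx2 1 0 0 (-1).
Definition xs : 'M[F]_2 := mx2 1 (-1) 1 (-1).
Definition ys : 'M[F]_2 := mx2 0 0 1 0.
Definition zs : 'M[F]_2 := mx2 0 (-1) 0 0.

(* G: the subgroup of Aut(sl2) generated by exp(ad xs), exp(ad ys), exp(ad zs).
   Elements are represented as maps on M_2(F); only their action on sl2 matters. *)
Inductive in_G : ('M[F]_2 -> 'M[F]_2) -> Prop :=
  | G_id : in_G id
  | G_genx : in_G (expnil (ad xs))
  | G_geny : in_G (expnil (ad ys))
  | G_genz : in_G (expnil (ad zs))
  | G_comp g h : in_G g -> in_G h -> in_G (g \o h)
  | G_inv g h : in_G g ->
      (forall A, in_sl2 A -> in_sl2 (h A)) ->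
      (forall A, in_sl2 A -> h (g A) = A /\ g (h A) = A) ->
      in_G h.

End SL2.

(* Main.v *)
Require Import Defs.
From HB Require Import structures.
From mathcomp Require Import all_boot all_order all_algebra.
From Stdlib Require Import Ring.
Import GRing.Theory.
Local Open Scope ring_scope.

Definition iadd (x y : int) : int := x + y.
Definition imul (x y : int) : int := x * y.
Definition iopp (x : int) : int := - x.
Definition isub (x y : int) : int := x - y.
Definition i0' : int := 0.
Definition i1' : int := 1.
Lemma ith : @ring_theory int i0' i1' iadd imul isub iopp eq.
Proof.
split; rewrite /iadd/imul/isub/iopp/i0'/i1' => *; [exact: add0r|exact: addrC|exact: addrA|exact: mul1r|exact: mulrC|exact: mulrA|exact: mulrDl|by []|exact: subrr].
Qed.
Add Ring IR : ith.
Lemma iaddE (x y : int) : x + y = iadd x y. Proof. by []. Qed.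
Lemma imulE (x y : int) : x * y = imul x y. Proof. by []. Qed.
Lemma ioppE (x : int) : - x = iopp x. Proof. by []. Qed.
Lemma i0E : 0 = i0' :> int. Proof. by []. Qed.
Lemma i1E : 1 = i1' :> int. Proof. by []. Qed.
Ltac iring := refine (_ : @eq int _ _); rewrite ?iaddE ?imulE ?ioppE ?i0E ?i1E; ring.

Section Main.
Variable F : fieldType.
Definition fadd (x y : F) : F := x + y.
Definition fmul (x y : F) : F := x * y.
Definition fopp (x : F) : F := - x.
Definition fsub (x y : F) : F := x - y.
Definition f0 : F := 0.
Definition f1 : F := 1.
Lemma fth : @ring_theory F f0 f1 fadd fmul fsub fopp eq.
Proof.
split; rewrite /fadd/fmul/fsub/fopp/f0/f1 => *; [exact: add0r|exact: addrC|exact: addrA|exact: mul1r|exact: mulrC|exact: mulrA|exact: mulrDl|by []|exact: subrr].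
Qed.
Add Ring FR : fth.
Lemma faddE (x y : F) : x + y = fadd x y. Proof. by []. Qed.
Lemma fmulE (x y : F) : x * y = fmul x y. Proof. by []. Qed.
Lemma foppE (x : F) : - x = fopp x. Proof. by []. Qed.
Lemma f0E : 0 = f0 :> F. Proof. by []. Qed.
Lemma f1E : 1 = f1 :> F. Proof. by []. Qed.
Ltac fring := refine (_ : @eq (GRing.Field.sort F) _ _); rewrite ?faddE ?fmulE ?foppE ?f0E ?f1E; ring.

Definition i0 : 'I_2 := @Ordinal 2 0 isT.
Definition i1 : 'I_2 := @Ordinal 2 1 isT.

Lemma ordcase (P : 'I_2 -> Prop) : P i0 -> P i1 -> forall i, P i.
Proof.
move=> H0 H1 [[|[|k]] Hk] //.
- by rewrite (_ : Ordinal Hk = i0) //; apply: val_inj.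
- by rewrite (_ : Ordinal Hk = i1) //; apply: val_inj.
Qed.

Lemma mx2P (A B : 'M[F]_2) :
  A i0 i0 = B i0 i0 -> A i0 i1 = B i0 i1 -> A i1 i0 = B i1 i0 -> A i1 i1 = B i1 i1 -> A = B.
Proof.
move=> h1 h2 h3 h4; apply/matrixP; apply: ordcase; apply: ordcase => //.
Qed.

Lemma mx2_eta (A : 'M[F]_2) : A = mx2 (A i0 i0) (A i0 i1) (A i1 i0) (A i1 i1).
Proof. by apply: mx2P; rewrite mxE. Qed.

Lemma mx2_eq a b c d a' b' c' d' :
  a = a' -> b = b' -> c = c' -> d = d' -> mx2 a b c d = mx2 a' b' c' d' :> 'M[F]_2.
Proof. by move=> -> -> -> ->. Qed.

Lemma mx2_entries a b c d :
  [/\ mx2 a b c d i0 i0 = a, mx2 a b c d i0 i1 = b, mx2 a b c d i1 i0 = c & mx2 a b c d i1 i1 = d :> F].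
Proof. by rewrite !mxE. Qed.

Lemma mx2_mul a b c d e f g h :
  mx2 a b c d *m mx2 e f g h = mx2 (a*e+b*g) (a*f+b*h) (c*e+d*g) (c*f+d*h) :> 'M[F]_2.
Proof. by apply: mx2P; rewrite !mxE !big_ord_recl big_ord0 !mxE /= addr0. Qed.

Lemma mx2_add a b c d e f g h :
  mx2 a b c d + mx2 e f g h = mx2 (a+e) (b+f) (c+g) (d+h) :> 'M[F]_2.
Proof. by apply: mx2P; rewrite !mxE. Qed.

Lemma mx2_opp a b c d : - mx2 a b c d = mx2 (-a) (-b) (-c) (-d) :> 'M[F]_2.
Proof. by apply: mx2P; rewrite !mxE. Qed.

Lemma mx2_scale k a b c d : k *: mx2 a b c d = mx2 (k*a) (k*b) (k*c) (k*d) :> 'M[F]_2.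
Proof. by apply: mx2P; rewrite !mxE. Qed.

Lemma mx2_0 : 0 = mx2 0 0 0 0 :> 'M[F]_2.
Proof. by apply: mx2P; rewrite !mxE. Qed.

Lemma mx2_tr a b c d : \tr (mx2 a b c d) = a + d :> F.
Proof. by rewrite /mxtrace !big_ord_recl big_ord0 !mxE /= addr0. Qed.


Definition cj (a b c d : F) (A : 'M[F]_2) := mx2 a b c d *m A *m mx2 d (-b) (-c) a.

Lemma expnil3 (D : 'M[F]_2 -> 'M[F]_2) (A : 'M[F]_2) : iter 3 D A = 0 ->
  expnil D A = A + D A + (1+1)^-1 *: D (D A).
Proof.
move=> H3; rewrite /expnil !big_ord_recl big_ord0 /=.
rewrite [D (D (D A))]H3 scaler0 addr0 /bump /= invr1 !scale1r addrA.
rewrite addr0 (_ : ((1 + (1 + 0))`!)%N = 2%N) // mulr2n.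
Qed.


Lemma gen_conj (n : 'M[F]_2) (a b c d : F) :
  (1 + 1 : F) != 0 ->
  (forall p q r s, ad n (ad n (ad n (mx2 p q r s))) = 0) ->
  (forall p q r s, ad n (ad n (mx2 p q r s)) = (-(1+1)) *: (n *m mx2 p q r s *m n)) ->
  (forall p q r s, mx2 p q r s + ad n (mx2 p q r s) - n *m mx2 p q r s *m n = cj a b c d (mx2 p q r s)) ->
  forall A, expnil (ad n) A = cj a b c d A.
Proof.
move=> two H3 H2 H A; rewrite [A]mx2_eta.
move: (A i0 i0) (A i0 i1) (A i1 i0) (A i1 i1) => p q r s.
rewrite expnil3; last exact: H3.
rewrite H2 scalerA mulrN mulVf // scaleN1r.
exact: H.
Qed.

Ltac mxs := rewrite /cj /ad /xs /ys /zs /ex ?mx2_0 ?(mx2_mul, mx2_opp, mx2_add, mx2_scale); apply: mx2_eq; fring.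

Lemma gen_x (two : (1 + 1 : F) != 0) A : expnil (ad (xs F)) A = cj (1+1) (-1) 1 0 A.
Proof. apply: gen_conj => // *; mxs. Qed.
Lemma gen_y (two : (1 + 1 : F) != 0) A : expnil (ad (ys F)) A = cj 1 0 1 1 A.
Proof. apply: gen_conj => // *; mxs. Qed.
Lemma gen_z (two : (1 + 1 : F) != 0) A : expnil (ad (zs F)) A = cj 1 (-1) 0 1 A.
Proof. apply: gen_conj => // *; mxs. Qed.


Ltac mxa A := rewrite [A]mx2_eta; move: (A i0 i0) (A i0 i1) (A i1 i0) (A i1 i1) => ? ? ? ?.

Lemma cj_tr a b c d (A : 'M[F]_2) : \tr (cj a b c d A) = (a*d - b*c) * \tr A.
Proof. mxa A; rewrite /cj ?(mx2_mul, mx2_opp, mx2_add, mx2_scale) !mx2_tr; fring. Qed.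

Lemma cj_comp a b c d a' b' c' d' (A : 'M[F]_2) :
  cj a b c d (cj a' b' c' d' A) = cj (a*a'+b*c') (a*b'+b*d') (c*a'+d*c') (c*b'+d*d') A.
Proof. mxa A; mxs. Qed.

Lemma cj_inv a b c d (A : 'M[F]_2) :
  cj d (-b) (-c) a (cj a b c d A) = ((a*d-b*c)*(a*d-b*c)) *: A.
Proof. mxa A; mxs. Qed.

Lemma cj_inv2 a b c d (A : 'M[F]_2) :
  cj a b c d (cj d (-b) (-c) a A) = ((a*d-b*c)*(a*d-b*c)) *: A.
Proof. mxa A; mxs. Qed.

Lemma cj_id (A : 'M[F]_2) : cj 1 0 0 1 A = A.
Proof. mxa A; mxs. Qed.

Lemma cj_ex p q r s :
  cj p q r s (ex F) = mx2 (p*s+q*r) (-(1+1) * p * q) ((1+1) * r * s) (-(p*s+q*r)).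
Proof. mxs. Qed.

Lemma cj_diag p (A : 'M[F]_2) : p * p = 1 -> cj p 0 0 p A = A.
Proof.
move=> pp; mxa A; rewrite /cj ?(mx2_mul, mx2_opp, mx2_add, mx2_scale).
apply: mx2_eq; rewrite -[RHS]mul1r -pp; fring.
Qed.


Variable charF0 : [pchar F] =i pred0.

Lemma two_neq0 : (1 + 1 : F) != 0.
Proof. by rewrite -mulr2n ((pcharf0P F).1 charF0 2). Qed.

Lemma intr_eq0F (z : int) : z%:~R = 0 :> F -> z = 0.
Proof.
case: z => n.
- move=> /eqP; rewrite /intmul /= ((pcharf0P F).1 charF0 n) => /eqP -> //.
- rewrite NegzE rmorphN /= => /eqP; rewrite oppr_eq0.
  by rewrite /intmul /= ((pcharf0P F).1 charF0 n.+1).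
Qed.

Lemma intr_injF (x y : int) : x%:~R = y%:~R :> F -> x = y.
Proof. move=> H; apply/eqP; rewrite -subr_eq0; apply/eqP/intr_eq0F; by rewrite rmorphB /= H subrr. Qed.


Definition icj (a b c d : int) := cj a%:~R b%:~R c%:~R d%:~R.

Definition rep (g : 'M[F]_2 -> 'M[F]_2) :=
  (forall A, in_sl2 A -> in_sl2 (g A)) /\
  exists a b c d : int, a*d - b*c = 1 /\ forall A, in_sl2 A -> g A = icj a b c d A.

Lemma detF (a b c d : int) : a*d - b*c = 1 -> a%:~R * d%:~R - b%:~R * c%:~R = 1 :> F.
Proof. by move=> H; rewrite -!rmorphM -rmorphB H rmorph1. Qed.

Lemma icj_sl2 a b c d A : a*d - b*c = 1 -> in_sl2 A -> in_sl2 (icj a b c d A).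
Proof. by move=> H; rewrite /in_sl2 /icj cj_tr detF // mul1r. Qed.

Lemma rep_gen (g : 'M[F]_2 -> 'M[F]_2) a b c d :
  a*d - b*c = 1 -> (forall A, g A = icj a b c d A) -> rep g.
Proof.
move=> H E; split=> [A HA|]; first by rewrite E; apply: icj_sl2.
by exists a, b, c, d; split=> // A _.
Qed.

Lemma cast2 : (2:int)%:~R = 1 + 1 :> F. Proof. by rewrite /intmul /= mulr2n. Qed.

Lemma G_rep g : in_G g -> rep g.
Proof.
elim=> {g}.
- apply: (@rep_gen _ 1 0 0 1) => // A; by rewrite /icj rmorph1 rmorph0 cj_id.
- apply: (@rep_gen _ 2 (-1) 1 0) => // A.
  by rewrite /icj cast2 rmorphN1 rmorph1 rmorph0 gen_x // two_neq0.
- apply: (@rep_gen _ 1 0 1 1) => // A.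
  by rewrite /icj rmorph1 rmorph0 gen_y // two_neq0.
- apply: (@rep_gen _ 1 (-1) 0 1) => // A.
  by rewrite /icj rmorphN1 rmorph1 rmorph0 gen_z // two_neq0.
- move=> g h _ [Sg [a [b [c [d [Hd Eg]]]]]] _ [Sh [a' [b' [c' [d' [Hd' Eh]]]]]].
  split=> [A HA|]; first by apply: Sg; apply: Sh.
  exists (a*a'+b*c'), (a*b'+b*d'), (c*a'+d*c'), (c*b'+d*d'); split.
    have -> : (a * a' + b * c') * (c * b' + d * d') - (a * b' + b * d') * (c * a' + d * c')
       = (a*d - b*c) * (a'*d' - b'*c') by iring.
    by rewrite Hd Hd' mulr1.
  move=> A HA /=; rewrite Eh // Eg; last exact: icj_sl2.
  by rewrite /icj cj_comp !rmorphD !rmorphM.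
- move=> g h _ [Sg [a [b [c [d [Hd Eg]]]]]] Sh Inv.
  split=> //; exists d, (-b), (-c), a; split.
    by rewrite -Hd mulrC mulrNN mulrC.
  move=> A HA; have [H1 H2] := Inv A HA.
  have := congr1 (cj d%:~R (- b%:~R) (- c%:~R) a%:~R) H2.
  rewrite Eg; last exact: Sh.
  rewrite {1}/icj cj_inv detF // mulr1 scale1r => ->.
  by rewrite /icj !rmorphN.
Qed.


Lemma int_unit (p s : int) : p * s = 1 -> p = 1 \/ p = -1.
Proof.
rewrite mulrC => /intUnitRing.unitzPl; rewrite qualifE /= => /orP[/eqP|/eqP]; by [left|right].
Qed.

Lemma key (a b c d a' b' c' d' : int) :
  a*d - b*c = 1 -> a'*d' - b'*c' = 1 ->
  icj a b c d (ex F) = icj a' b' c' d' (ex F) ->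
  forall A, icj a b c d A = icj a' b' c' d' A.
Proof.
move=> Hd Hd' Hx.
set p := d'*a + (-b')*c; set q := d'*b + (-b')*d.
set r := (-c')*a + a'*c; set s := (-c')*b + a'*d.
have HR : forall A, icj p q r s A = cj d'%:~R (- b'%:~R) (- c'%:~R) a'%:~R (icj a b c d A).
  by move=> A; rewrite /icj cj_comp /p /q /r /s !rmorphD !rmorphM !rmorphN.
have dR : p*s - q*r = 1.
  have -> : p*s - q*r = (a'*d' - b'*c') * (a*d - b*c) by rewrite /p/q/r/s; iring.
  by rewrite Hd Hd' mulr1.
have HRx : icj p q r s (ex F) = ex F.
  by rewrite HR Hx {1}/icj cj_inv detF // mulr1 scale1r.
have E00 := congr1 (fun M : 'M[F]_2 => M i0 i0) HRx.
have E01 := congr1 (fun M : 'M[F]_2 => M i0 i1) HRx.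
have E10 := congr1 (fun M : 'M[F]_2 => M i1 i0) HRx.
move: E00 E01 E10; rewrite /icj cj_ex /ex !mxE /=.
move=> E00 E01 E10.
have e1 : p*s + q*r = 1.
  by apply: intr_injF; rewrite rmorphD !rmorphM rmorph1.
have e2 : p*q = 0.
  apply: intr_eq0F; rewrite rmorphM.
  move: E01; rewrite -mulrA mulNr => /eqP; rewrite oppr_eq0 mulf_eq0 (negbTE two_neq0) /=.
  by move/eqP.
have e3 : r*s = 0.
  apply: intr_eq0F; rewrite rmorphM.
  move: E10; rewrite -mulrA => /eqP; rewrite mulf_eq0 (negbTE two_neq0) /=.
  by move/eqP.
have e4 : q*r = 0.
  have : q*r + q*r = (p*s+q*r) - (p*s - q*r) by iring.
  rewrite e1 dR subrr => /eqP; rewrite -mulr2n -mulr_natr mulf_eq0 orbF => /eqP //.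
have e5 : p*s = 1 by rewrite -e1 e4 addr0.
have p0 : p != 0 by apply/eqP=> p0; move: e5; rewrite p0 mul0r.
have s0 : s != 0 by apply/eqP=> s0; move: e5; rewrite s0 mulr0.
have q0 : q = 0 by move/eqP: e2; rewrite mulf_eq0 (negbTE p0) => /eqP.
have r0 : r = 0 by move/eqP: e3; rewrite mulf_eq0 (negbTE s0) orbF => /eqP.
have sp : s = p.
  case: (int_unit _ _ e5) => pv; move: e5; rewrite pv ?mul1r ?mulN1r // => /eqP.
  by rewrite eqr_oppLR => /eqP.
have Rid : forall A, icj p q r s A = A.
  move=> A; rewrite /icj q0 r0 sp rmorph0; apply: cj_diag.
  have pp : p * p = 1 by rewrite -{2}sp.
  by rewrite -rmorphM pp rmorph1.
move=> A; change (icj a b c d A = icj a' b' c' d' A).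
have := cj_inv2 a'%:~R b'%:~R c'%:~R d'%:~R (icj a b c d A).
rewrite detF // mulr1 scale1r => <-.
by rewrite -HR Rid.
Qed.

End Main.

Theorem lemma4p1 (F : fieldType) (charF0 : [pchar F] =i pred0) :
  (forall g : 'M[F]_2 -> 'M[F]_2,
      in_G g -> g (ex F) = ex F -> forall A, in_sl2 A -> g A = A) /\
  (forall g h : 'M[F]_2 -> 'M[F]_2,
      in_G g -> in_G h -> g (ex F) = h (ex F) -> forall A, in_sl2 A -> g A = h A).
Proof.
have exsl : in_sl2 (ex F) by rewrite /in_sl2 /ex mx2_tr subrr.
have P2 : forall g h : 'M[F]_2 -> 'M[F]_2,
      in_G g -> in_G h -> g (ex F) = h (ex F) -> forall A, in_sl2 A -> g A = h A.
  move=> g h /(@G_rep F charF0 _) [_ [a [b [c [d [Hd Eg]]]]]] /(@G_rep F charF0 _) [_ [a' [b' [c' [d' [Hd' Eh]]]]]] E A HA.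
  rewrite Eg // Eh //; apply: (@key F charF0 _ _ _ _ _ _ _ _ Hd Hd').
  by rewrite -Eg // -Eh.
split=> // g Hg E A HA; exact: (P2 g id Hg (G_id F) E A HA).
Qed.
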